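(* Let $s,t,z$ be positive integers, let $\lambda$ be an integer with $0\le\lambda\le z$, and put $\theta=ts+\lambda$. Let $A_{i,j}$ ($0\le i\le t-1$, $0\le j\le s-1$) be matrices of size $\frac{m}{t}\times\frac{m}{s}$ and $B_{k,l}$ ($0\le k\le s-1$, $0\le l\le t-1$) matrices of size $\frac ms\times\frac mt$ over a field, and define $C_A(x)=\sum_{i=0}^{t-1}\sum_{j=0}^{s-1}A_{i,j}x^{j+is}$, $C_B(x)=\sum_{k=0}^{s-1}\sum_{l=0}^{t-1}B_{k,l}x^{(s-1-k)+\theta l}$, $C_Y(x)=C_A(x)C_B(x)$. Then the $t^2$ integers $s-1+si+\theta l$ ($0\le i,l\le t-1$) are pairwise distinct, and for every $i,l\in\{0,\dots,t-1\}$ the coefficient of $x^{s-1+si+\theta l}$ in $C_Y(x)$ is $\sum_{j=0}^{s-1}A_{i,j}B_{j,l}$; that is, every block $Y_{i,l}=\sum_{j}A_{i,j}B_{j,l}$ of $Y=A^TB$ can be read off from $C_Y$.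
   Context: $A_{i,j}$ are the blocks of $A^T$ and $B_{k,l}$ the blocks of $B$ when $A,B\in\mathbb F^{m\times m}$ are split into $s$ row-wise and $t$ column-wise parts; these are the Adaptive Gap Entangled (AGE) codes with parameter $\lambda$. *)

(* Defs.v *)
From mathcomp Require Import all_boot all_algebra.
Set Implicit Arguments. Unset Strict Implicit. Unset Printing Implicit Defensive.
Import GRing.Theory.
Local Open Scope ring_scope.

(* A polynomial with (possibly rectangular) matrix coefficients,
   represented by its coefficient sequence: coefficient of x^n is c n.
   Only finitely many are nonzero in our uses. *)
Definition mxpoly_coef (F : fieldType) (p q : nat) := nat -> 'M[F]_(p, q).

Definition CA (F : fieldType) (p q s t : nat)
  (A : 'I_t -> 'I_s -> 'M[F]_(p, q)) : mxpoly_coef F p q :=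
  fun n => \sum_(i < t) \sum_(j < s) (if (j + i * s)%N == n then A i j else 0).

Definition CB (F : fieldType) (q r s t theta : nat)
  (B : 'I_s -> 'I_t -> 'M[F]_(q, r)) : mxpoly_coef F q r :=
  fun n => \sum_(k < s) \sum_(l < t)
             (if ((s - 1 - k) + theta * l)%N == n then B k l else 0).

Definition mxpoly_mul_coef (F : fieldType) (p q r : nat)
  (P : mxpoly_coef F p q) (Q : mxpoly_coef F q r) : mxpoly_coef F p r :=
  fun n => \sum_(a < n.+1) (P a *m Q (n - a)%N).

(* Main.v *)
Require Import Defs.
From mathcomp Require Import all_boot all_algebra zify.
Import GRing.Theory.
Local Open Scope ring_scope.

Lemma arith (s t lam i l i' l' j k : nat) : (0 < s)%N -> (i < t)%N -> (l < t)%N ->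
  (i' < t)%N -> (l' < t)%N -> (j < s)%N -> (k < s)%N ->
  let th := (t * s + lam)%N in
  let n := (s - 1 + s * i + th * l)%N in
  ((j + i' * s <= n)%N && ((s - 1 - k + th * l')%N == (n - (j + i' * s))%N)) =
  [&& i' == i, k == j & l' == l].
Proof.
move=> hs hi hl hi' hl' hj hk th n.
have Hb : forall a, (a < t)%N -> (s * a + s <= t * s)%N.
  by move=> a ha; nia.
have Hth : (t * s <= th)%N by rewrite /th; lia.
have Hl : forall a b, (a < b)%N -> (th * a + th <= th * b)%N.
  by move=> a b hab; nia.
have Hi : forall a b, (a < b)%N -> (s * a + s <= s * b)%N.
  by move=> a b hab; nia.
have := Hb i hi; have := Hb i' hi'.
rewrite /n (mulnC i' s); clearbody th; move=> B1 B2.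
case: (ltngtP l l') => [/Hl|/Hl|<-]; first lia; first lia.
case: (ltngtP i i') => [/Hi|/Hi|<-]; first lia; first lia.
apply/idP/idP; last by move=> /and3P[_ /eqP -> _]; lia.
move=> /andP[_ /eqP H]; apply/and3P; split => //; apply/eqP; lia.
Qed.

Lemma distinct (s t lam i l i' l' : nat) : (0 < s)%N -> (i < t)%N -> (l < t)%N ->
  (i' < t)%N -> (l' < t)%N ->
  (s - 1 + s * i + (t * s + lam) * l)%N = (s - 1 + s * i' + (t * s + lam) * l')%N ->
  i = i' /\ l = l'.
Proof.
move=> hs hi hl hi' hl'.
have Hb : forall a, (a < t)%N -> (s * a + s <= t * s)%N.
  by move=> a ha; nia.
set th := (t * s + lam)%N.
have Hth : (t * s <= th)%N by rewrite /th; lia.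
have Hl : forall a b, (a < b)%N -> (th * a + th <= th * b)%N.
  by move=> a b hab; nia.
have Hi : forall a b, (a < b)%N -> (s * a + s <= s * b)%N.
  by move=> a b hab; nia.
have := Hb i hi; have := Hb i' hi'; clearbody th => B1 B2.
case: (ltngtP l l') => [/Hl|/Hl|<-]; first lia; first lia.
case: (ltngtP i i') => [/Hi|/Hi|<-]; first lia; first lia.
by [].
Qed.

Lemma mul_sums (F : fieldType) p q r (I J K L : finType)
  (f : I -> J -> 'M[F]_(p, q)) (g : K -> L -> 'M[F]_(q, r)) :
  (\sum_i \sum_j f i j) *m (\sum_k \sum_l g k l) =
  \sum_i \sum_j \sum_k \sum_l (f i j *m g k l).
Proof.
rewrite mulmx_suml; apply: eq_bigr => i _.
rewrite mulmx_suml; apply: eq_bigr => j _.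
rewrite mulmx_sumr; apply: eq_bigr => k _.
by rewrite mulmx_sumr.
Qed.

Lemma sum_single (F : fieldType) p q r n c (M : 'M[F]_(p, q)) (g : nat -> 'M[F]_(q, r)) :
  \sum_(a < n.+1) ((if c == (a : nat) then M else 0) *m g (n - a)%N) =
  if (c <= n)%N then M *m g (n - c)%N else 0.
Proof.
case: ifP => hc.
  rewrite (bigD1 (Ordinal (n:=n.+1) (m:=c) hc)) //= eqxx big1 ?addr0 // => a ha.
  case: eqP => [e|]; last by rewrite mul0mx.
  by move: ha; rewrite -val_eqE /= e eqxx.
apply: big1 => a _; case: eqP => [e|]; last by rewrite mul0mx.
by move: hc; rewrite e -ltnS ltn_ord.
Qed.

Theorem theorem3 (F : fieldType) (m s t z lambda : nat)
  (hs : (0 < s)%N) (ht : (0 < t)%N) (hz : (0 < z)%N)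
  (hlam : (lambda <= z)%N) (hsm : (s %| m)%N) (htm : (t %| m)%N)
  (A : 'I_t -> 'I_s -> 'M[F]_(m %/ t, m %/ s))
  (B : 'I_s -> 'I_t -> 'M[F]_(m %/ s, m %/ t)) :
  let theta := (t * s + lambda)%N in
  let CY := mxpoly_mul_coef (CA A) (CB theta B) in
  (forall i l i' l' : 'I_t,
     (s - 1 + s * i + theta * l)%N = (s - 1 + s * i' + theta * l')%N ->
     i = i' /\ l = l') /\
  (forall i l : 'I_t,
     CY (s - 1 + s * i + theta * l)%N = \sum_(j < s) (A i j *m B j l)).
Proof.
move=> theta CY; split.
  move=> i l i' l' /(@distinct s t lambda i l i' l' hs (ltn_ord _) (ltn_ord _) (ltn_ord _) (ltn_ord _)) [e1 e2]; split; exact: val_inj.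
move=> i l; rewrite /CY /mxpoly_mul_coef /CA /CB.
set n := (s - 1 + s * i + theta * l)%N.
under eq_bigr => a _ do rewrite mul_sums.
transitivity (\sum_(i' < t) \sum_(j' < s) \sum_(k < s) \sum_(l' < t)
   (if [&& i' == i, k == j' & l' == l] then A i' j' *m B k l' else 0)).
  rewrite exchange_big; apply: eq_bigr => i' _.
  rewrite exchange_big; apply: eq_bigr => j' _.
  rewrite exchange_big; apply: eq_bigr => k _.
  rewrite exchange_big; apply: eq_bigr => l' _.
  rewrite (@sum_single _ _ _ _ n (j' + i' * s)%N (A i' j')
     (fun b => if (s - 1 - k + theta * l')%N == b then B k l' else 0)).
  have := @arith s t lambda i l i' l' j' k hs (ltn_ord _) (ltn_ord _) (ltn_ord _)
    (ltn_ord _) (ltn_ord _) (ltn_ord _).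
  move=> /= E; rewrite -/theta -/n in E.
  case h1: (_ <= n)%N; case h2: ((s - 1 - k + theta * l')%N == (n - (j' + i' * s))%N); rewrite ?mulmx0 //=;
    move: E; rewrite h1 h2 /= => <- //.
rewrite (bigD1 i) //= [X in _ + X]big1 ?addr0; last first.
  move=> i' /negbTE ne; apply: big1 => j' _; apply: big1 => k _; apply: big1 => l' _.
  by rewrite ne.
apply: eq_bigr => j' _.
rewrite (bigD1 j') //= [X in _ + X]big1 ?addr0; last first.
  move=> k /negbTE ne; apply: big1 => l' _.
  by rewrite ne andbF.
rewrite (bigD1 l) //= !eqxx [X in _ + X]big1 ?addr0 //.
by move=> l' /negbTE ne; rewrite ne !andbF.
Qed.
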